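(* Let $\mathcal{G}\rightrightarrows M$ be a diffeological groupoid. Then the quotient groupoid $\mathcal{G}/(\mathcal{G},\mathcal{G})$, equipped with the quotient diffeology, is a diffeological groupoid and, together with the quotient map, is the abelianization of $\mathcal{G}$ in the category of diffeological groupoids.
   Context: A diffeological space is a set $X$ with a family of maps (plots) from open subsets of Euclidean spaces to $X$, containing constants, local in nature, and closed under precomposition with smooth maps; smooth maps send plots to plots. A diffeological groupoid is a groupoid object in diffeological spaces. For a surjection $q:X\to\tilde X$, the quotient diffeology consists of maps $P:U\to\tilde X$ that locally are constant or of the form $q\circ Q$ with $Q$ a plot of $X$; the subset diffeology on $Y\subset X$ consists of plots of $X$ with image in $Y$. The D-topology is the finest topology making all plots continuous. $(\mathcal{G},\mathcal{G})=\bigcup_x(\mathcal{G}_x,\mathcal{G}_x)$ is the union of the commutator subgroups of the isotropy groups $\mathcal{G}_x$. A groupoid is abelian if all isotropy groups are abelian. An abelianization of $\mathcal{G}\rightrightarrows M$ is an abelian diffeological groupoid $\mathcal{G}^{ab}\rightrightarrows M$ with a surjective smooth groupoid morphism $p:\mathcal{G}\to\mathcal{G}^{ab}$ covering $\mathrm{id}_M$ such that for every open (in the D-topology) $U\subset M$, every abelian diffeological groupoid $\mathcal{H}$ and every smooth morphism $\psi:\mathcal{G}|_U\to\mathcal{H}$ (restrictions carrying the subset diffeology) there is a unique smooth morphism $\tilde\psi:\mathcal{G}^{ab}|_U\to\mathcal{H}$ with $\tilde\psi\circ p|_U=\psi$. *)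

(* Defs.v *)
From HB Require Import structures.
From mathcomp Require Import all_boot all_order all_algebra.
From mathcomp Require Import all_classical all_reals all_analysis.
From mathcomp Require Import Rstruct Rstruct_topology.
Unset Printing Implicit Defensive.
Import Order.TTheory GRing.Theory Num.Theory.
Import numFieldNormedType.Exports.
Local Open Scope classical_set_scope.
Local Open Scope ring_scope.

Notation RR := Rdefinitions.R.

Fixpoint Ck {n m : nat} (k : nat) (V : set 'rV[RR]_n)
    (f : 'rV[RR]_n -> 'rV[RR]_m) : Prop :=
  match k with
  | 0 => forall x, V x -> {for x, continuous f}
  | k'.+1 => (forall x, V x -> differentiable f x) /\
             (forall v : 'rV[RR]_n, Ck k' V (fun x => 'D_v f x))
  end.

Definition smooth_on {n m : nat} (V : set 'rV[RR]_n)
    (f : 'rV[RR]_n -> 'rV[RR]_m) : Prop := forall k, Ck k V f.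

Definition plots (X : Type) :=
  forall (n : nat) (U : set 'rV[RR]_n), ({u | U u} -> X) -> Prop.

Definition restrict_par (X : Type) (n : nat) (U V : set 'rV[RR]_n)
    (hV : V `<=` U) (P : {u | U u} -> X) : {v | V v} -> X :=
  fun v => P (exist _ (proj1_sig v) (hV _ (proj2_sig v))).
Arguments restrict_par {X n U V} hV P.

Definition is_diffeology {X : Type} (D : plots X) : Prop :=
  (forall n U P, D n U P -> open U) /\
  (forall n (U : set 'rV[RR]_n) (x : X), open U -> D n U (fun _ => x)) /\
  (forall n (U : set 'rV[RR]_n) (P : {u | U u} -> X), open U ->
     (forall u, U u -> exists V (hV : V `<=` U),
        [/\ open V, V u & D n V (restrict_par hV P)]) ->
     D n U P) /\
  (forall n m (U : set 'rV[RR]_n) (V : set 'rV[RR]_m) (P : {u | U u} -> X)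
          (F : 'rV[RR]_m -> 'rV[RR]_n) (hF : forall v, V v -> U (F v)),
     D n U P -> open V -> smooth_on V F ->
     D m V (fun v => P (exist _ (F (proj1_sig v)) (hF _ (proj2_sig v))))).

Definition dsmooth (X Y : Type) (DX : plots X) (DY : plots Y) (f : X -> Y) :=
  forall n U P, DX n U P -> DY n U (f \o P).
Arguments dsmooth {X Y} DX DY f.

Definition prod_plots (X Y : Type) (DX : plots X) (DY : plots Y)
  : plots (X * Y) :=
  fun n U P => DX n U (fst \o P) /\ DY n U (snd \o P).
Arguments prod_plots {X Y} DX DY _ _ _.

Definition sub_plots (X : Type) (A : set X) (DX : plots X) : plots {x | A x} :=
  fun n U P => DX n U (@proj1_sig _ _ \o P).
Arguments sub_plots {X} A DX _ _ _.

Definition quot_plots (X Y : Type) (q : X -> Y) (DX : plots X) : plots Y :=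
  fun n U P => open U /\
    forall u, U u -> exists V (hV : V `<=` U), [/\ open V, V u &
      (exists y, forall v, restrict_par hV P v = y) \/
      (exists Q, DX n V Q /\ forall v, restrict_par hV P v = q (Q v))].
Arguments quot_plots {X Y} q DX _ _ _.

Definition D_open (X : Type) (DX : plots X) (A : set X) : Prop :=
  forall n U P, DX n U P ->
    open [set x : 'rV[RR]_n | exists h : U x, A (P (exist _ x h))].
Arguments D_open {X} DX A.

Section Groupoids.
Variables (G M : Type) (DG : plots G) (DM : plots M).
Variables (src tgt : G -> M) (unit : M -> G) (inv : G -> G) (mul : G -> G -> G).
(* convention: mul g h is defined when src g = tgt h ("g after h") *)

Definition composable : set (G * G) := [set p | src p.1 = tgt p.2].

Definition groupoid_axioms : Prop :=
  (forall x, src (unit x) = x /\ tgt (unit x) = x) /\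
  (forall g, src (inv g) = tgt g /\ tgt (inv g) = src g) /\
  (forall g h, src g = tgt h -> src (mul g h) = src h /\ tgt (mul g h) = tgt g) /\
  (forall g h k, src g = tgt h -> src h = tgt k ->
      mul (mul g h) k = mul g (mul h k)) /\
  (forall g, mul (unit (tgt g)) g = g /\ mul g (unit (src g)) = g) /\
  (forall g, mul g (inv g) = unit (tgt g) /\ mul (inv g) g = unit (src g)).

Definition is_dgroupoid : Prop :=
  [/\ is_diffeology DG, is_diffeology DM & groupoid_axioms] /\
  [/\ dsmooth DG DM src, dsmooth DG DM tgt,
      dsmooth DM DG unit, dsmooth DG DG inv &
      dsmooth (sub_plots composable (prod_plots DG DG)) DG
              (fun p => mul (proj1_sig p).1 (proj1_sig p).2)].

Definition isotropic (x : M) (g : G) : Prop := src g = x /\ tgt g = x.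

Definition abelian_gpd : Prop :=
  forall x g h, isotropic x g -> isotropic x h -> mul g h = mul h g.

Definition comp_graph (g h k : G) : Prop := src g = tgt h /\ k = mul g h.

Inductive commutator_sub (x : M) : G -> Prop :=
| cs_unit : commutator_sub x (unit x)
| cs_comm a b : isotropic x a -> isotropic x b ->
    commutator_sub x (mul (mul a b) (mul (inv a) (inv b)))
| cs_mul g h : commutator_sub x g -> commutator_sub x h ->
    commutator_sub x (mul g h)
| cs_inv g : commutator_sub x g -> commutator_sub x (inv g).

Definition comm_subgpd : set G := [set g | exists x, commutator_sub x g].

Definition ab_rel (g h : G) : Prop :=
  exists n, comm_subgpd n /\ src n = tgt g /\ h = mul n g.

Definition ab_quot : Type := {A : set G | exists g, A = ab_rel g}.

Definition ab_proj (g : G) : ab_quot := exist _ (ab_rel g) (ex_intro _ g erefl).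

Definition res_arr (U : set M) : Type := {g : G | U (src g) /\ U (tgt g)}.
Definition res_src (U : set M) (g : res_arr U) : {x | U x} :=
  exist _ (src (proj1_sig g)) (proj1 (proj2_sig g)).
Definition res_tgt (U : set M) (g : res_arr U) : {x | U x} :=
  exist _ (tgt (proj1_sig g)) (proj2 (proj2_sig g)).
Definition res_comp (U : set M) (g h k : res_arr U) : Prop :=
  comp_graph (proj1_sig g) (proj1_sig h) (proj1_sig k).
Definition res_arr_plots (U : set M) : plots (res_arr U) :=
  sub_plots (fun g => U (src g) /\ U (tgt g)) DG.
Definition res_obj_plots (U : set M) : plots {x | U x} := sub_plots U DM.

End Groupoids.
Arguments composable {G M} src tgt.
Arguments groupoid_axioms {G M} src tgt unit inv mul.
Arguments is_dgroupoid {G M} DG DM src tgt unit inv mul.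
Arguments isotropic {G M} src tgt x g.
Arguments abelian_gpd {G M} src tgt mul.
Arguments comp_graph {G M} src tgt mul g h k.
Arguments commutator_sub {G M} src tgt unit inv mul x _.
Arguments comm_subgpd {G M} src tgt unit inv mul _.
Arguments ab_rel {G M} src tgt unit inv mul g h.
Arguments ab_quot {G M} src tgt unit inv mul.
Arguments ab_proj {G M} src tgt unit inv mul g.
Arguments res_arr {G M} src tgt U.
Arguments res_src {G M} src tgt U g.
Arguments res_tgt {G M} src tgt U g.
Arguments res_comp {G M} src tgt mul U g h k.
Arguments res_arr_plots {G M} DG src tgt U _ _ _.
Arguments res_obj_plots {M} DM U _ _ _.

Definition is_gpd_morphism {G M H N : Type}
    (DG : plots G) (DM : plots M) (DH : plots H) (DN : plots N)
    (srcG tgtG : G -> M) (compG : G -> G -> G -> Prop)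
    (srcH tgtH : H -> N) (compH : H -> H -> H -> Prop)
    (f : G -> H) (f0 : M -> N) : Prop :=
  [/\ dsmooth DG DH f, dsmooth DM DN f0,
      forall g, srcH (f g) = f0 (srcG g),
      forall g, tgtH (f g) = f0 (tgtG g) &
      forall g h k, compG g h k -> compH (f g) (f h) (f k)].

Definition is_abelianization {G M A : Type} (DG : plots G) (DM : plots M)
    (src tgt : G -> M) (unit : M -> G) (inv : G -> G) (mul : G -> G -> G)
    (DA : plots A) (srcA tgtA : A -> M) (unitA : M -> A) (invA : A -> A)
    (mulA : A -> A -> A) (p : G -> A) : Prop :=
  [/\ is_dgroupoid DA DM srcA tgtA unitA invA mulA,
      abelian_gpd srcA tgtA mulA,
      (forall a, exists g, p g = a),
      is_gpd_morphism DG DM DA DM src tgt (comp_graph src tgt mul)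
        srcA tgtA (comp_graph srcA tgtA mulA) p id &
      forall (U : set M), D_open DM U ->
      forall (H N : Type) (DH : plots H) (DN : plots N)
             (srcH tgtH : H -> N) (unitH : N -> H) (invH : H -> H)
             (mulH : H -> H -> H),
        is_dgroupoid DH DN srcH tgtH unitH invH mulH ->
        abelian_gpd srcH tgtH mulH ->
      forall (psi : res_arr src tgt U -> H) (psi0 : {x | U x} -> N),
        is_gpd_morphism (res_arr_plots DG src tgt U) (res_obj_plots DM U) DH DN
          (res_src src tgt U) (res_tgt src tgt U)
          (res_comp src tgt mul U)
          srcH tgtH (comp_graph srcH tgtH mulH) psi psi0 ->
        exists chi : res_arr srcA tgtA U -> H,
          [/\ is_gpd_morphism (res_arr_plots DA srcA tgtA U) (res_obj_plots DM U)
                DH DN (res_src srcA tgtA U) (res_tgt srcA tgtA U)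
                (res_comp srcA tgtA mulA U)
                srcH tgtH (comp_graph srcH tgtH mulH) chi psi0,
              (forall g a, proj1_sig a = p (proj1_sig g) -> chi a = psi g) &
              forall (chi' : res_arr srcA tgtA U -> H) (chi0' : {x | U x} -> N),
                is_gpd_morphism (res_arr_plots DA srcA tgtA U) (res_obj_plots DM U)
                  DH DN (res_src srcA tgtA U) (res_tgt srcA tgtA U)
                  (res_comp srcA tgtA mulA U)
                  srcH tgtH (comp_graph srcH tgtH mulH) chi' chi0' ->
                (forall g a, proj1_sig a = p (proj1_sig g) -> chi' a = psi g) ->
                chi' = chi]].

(* Main.v *)
Require Import Defs.
Set Warnings "-all".
From mathcomp Require Import all_boot all_order all_algebra.
From mathcomp Require Import all_classical all_reals all_analysis.
From mathcomp Require Import Rstruct Rstruct_topology.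
Import numFieldNormedType.Exports.
Local Open Scope classical_set_scope.
Local Open Scope ring_scope.


Lemma Ck_cst n m k (V : set 'rV[RR]_n) (c : 'rV[RR]_m) : Ck k V (fun _ => c).
Proof.
elim: k c => [|k IH] c /=.
  by move=> x _; apply: cst_continuous.
split; first by move=> x _; apply: differentiable_cst.
move=> v.
have -> : (fun x => 'D_v (fun _ : 'rV[RR]_n => c) x) = (fun _ => 0 : 'rV[RR]_m).
  by apply: funext => x; exact: (derive_cst c x v).
exact: IH.
Qed.

Lemma Ck_id n k (V : set 'rV[RR]_n) : Ck k V (fun x => x).
Proof.
case: k => [|k] /=.
  by move=> x _ A hA; exact: hA.
split; first by move=> x _; exact: (@ex_diff _ _ _ _ _ _ _ (is_diff_id x)).
move=> v.
have -> : (fun x => 'D_v (fun x : 'rV[RR]_n => x) x) = (fun _ => v).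
  by apply: funext => x; exact: (derive_id x v).
exact: Ck_cst.
Qed.

Lemma Ck_sub n m k (V W : set 'rV[RR]_n) (f : 'rV[RR]_n -> 'rV[RR]_m) :
  W `<=` V -> Ck k V f -> Ck k W f.
Proof.
move=> hWV; elim: k f => [|k IH] f /=.
  by move=> h x /hWV; apply: h.
move=> [h1 h2]; split; first by move=> x /hWV; apply: h1.
by move=> v; apply: IH.
Qed.

Lemma open_preimage n m (V : set 'rV[RR]_n) (W : set 'rV[RR]_m)
   (F : 'rV[RR]_n -> 'rV[RR]_m) :
  open V -> open W -> (forall x, V x -> {for x, continuous F}) ->
  open [set y | V y /\ W (F y)].
Proof.
move=> oV oW cF; rewrite openE => y [Vy WFy].
rewrite /interior /=.
have nV : nbhs y V by apply: open_nbhs_nbhs.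
have nW : nbhs (F y) W by apply: open_nbhs_nbhs.
have := cF y Vy _ nW => nF.
by apply: filterS (filterI nV nF) => z [].
Qed.

Lemma eq_exist_pi (A : Type) (P : A -> Prop) x y (px : P x) (py : P y) :
  x = y -> exist P x px = exist P y py.
Proof. by move=> exy; subst y; congr exist; apply: Prop_irrelevance. Qed.

Lemma restrict_comp (X : Type) n (U V W : set 'rV[RR]_n) (hV : V `<=` U)
   (hW : W `<=` V) (hWU : W `<=` U) (P : {u | U u} -> X) v :
  restrict_par hW (restrict_par hV P) v = restrict_par hWU P v.
Proof. by rewrite /restrict_par; congr P; apply: eq_exist_pi. Qed.
Arguments restrict_comp {X n U V W} hV hW hWU P v.

Lemma restrict_plot (X : Type) (D : plots X) : is_diffeology D ->
  forall n (U V : set 'rV[RR]_n) (hV : V `<=` U) P, D n U P -> open V ->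
  D n V (restrict_par hV P).
Proof.
move=> [_ [_ [_ hsm]]] n U V hV P DP oV.
exact (hsm n n U V P (fun x => x) hV DP oV (fun k => Ck_id _ k V)).
Qed.

Lemma dsmooth_comp (X Y Z : Type) (DX : plots X) (DY : plots Y) (DZ : plots Z)
  (f : X -> Y) (g : Y -> Z) :
  dsmooth DX DY f -> dsmooth DY DZ g -> dsmooth DX DZ (g \o f).
Proof. by move=> hf hg n U P /hf /hg. Qed.

Section Quot.
Variables (X Y : Type) (q : X -> Y) (D : plots X).
Hypothesis (HD : is_diffeology D) (Hq : forall y, exists x, q x = y).

Lemma quot_lift n U P : quot_plots q D n U P -> forall u, U u ->
  exists V (hV : V `<=` U) Q,
    [/\ open V, V u, D n V Q & forall v, restrict_par hV P v = q (Q v)].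
Proof.
move=> [oU hP] u Uu; have [V [hV [oV Vu [[y hy]|[Q [DQ hQ]]]]]] := hP u Uu.
- have [x qx] := Hq y; exists V, hV, (fun _ => x); split => //.
    by case: HD => [_ [hc _]]; apply: hc.
  by move=> v; rewrite hy qx.
- by exists V, hV, Q.
Qed.

Arguments quot_lift {n U P} hP {u} Uu.
Lemma quot_intro n U P : open U -> (forall u, U u ->
  exists V (hV : V `<=` U) Q,
    [/\ open V, V u, D n V Q & forall v, restrict_par hV P v = q (Q v)]) ->
  quot_plots q D n U P.
Proof.
move=> oU h; split => // u Uu; have [V [hV [Q [oV Vu DQ hQ]]]] := h u Uu.
by exists V, hV; split => //; right; exists Q.
Qed.

Lemma quot_is_diffeology : is_diffeology (quot_plots q D).
Proof.
have HD' := HD; case: HD' => [hop [hc [hloc hsm]]].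
split; first by move=> n U P [].
split.
  move=> n U y oU; split => // u Uu; exists U, (fun _ h => h); split => //.
  by left; exists y.
split.
  move=> n U P oU hP; split => // u Uu.
  have [V [hV [oV Vu [oV' hPV]]]] := hP u Uu.
  have [W [hW [oW Wu hc']]] := hPV u Vu.
  have hWU : W `<=` U by move=> w /hW /hV.
  exists W, hWU; split => //.
  case: hc' => [[y hy]|[Q [DQ hQ]]].
    by left; exists y => v; rewrite -(restrict_comp hV hW hWU).
  by right; exists Q; split => // v; rewrite -(restrict_comp hV hW hWU).
move=> n m U V P F hF hP oV sF.
apply: quot_intro => // v Vv.
have [W [hW [Q [oW Wu DQ hQ]]]] := quot_lift hP (hF v Vv).
pose W' := [set y | V y /\ W (F y)].
have oW' : open W'.
  by apply: open_preimage => // x Vx; exact: (sF 0%N x Vx).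
have hW' : W' `<=` V by move=> y [].
have hFW : forall y, W' y -> W (F y) by move=> y [].
exists W', hW', (fun y => Q (exist _ (F (proj1_sig y)) (hFW _ (proj2_sig y)))).
split => //.
- refine (hsm n m W W' Q F hFW DQ oW' _) => k; apply: Ck_sub (sF k); exact: hW'.
- move=> y; rewrite -hQ /restrict_par /=; congr P; exact: eq_exist_pi.
Qed.

Lemma quot_desc (Z : Type) (DZ : plots Z) (f : Y -> Z) :
  is_diffeology DZ -> dsmooth D DZ (f \o q) -> dsmooth (quot_plots q D) DZ f.
Proof.
move=> [_ [_ [hloc _]]] hf n U P hP; apply: hloc; first by case: hP.
move=> u Uu; have [V [hV [Q [oV Vu DQ hQ]]]] := quot_lift hP Uu.
exists V, hV; split => //.
have -> : restrict_par hV (f \o P) = (f \o q) \o Q.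
  by apply: funext => v; rewrite /= -hQ.
exact: hf.
Qed.

Lemma quot_q : dsmooth D (quot_plots q D) q.
Proof.
move=> n U P DP.
have oU : open U by case: HD => hop _; exact: (hop _ _ _ DP).
apply: quot_intro => // u Uu; exists U, (fun _ h => h), P; split => //.
by move=> [v hv].
Qed.

Lemma quot_map (f : Y -> Y) (g : X -> X) :
  (forall x, f (q x) = q (g x)) -> dsmooth D D g ->
  dsmooth (quot_plots q D) (quot_plots q D) f.
Proof.
move=> hfg hg n U P hP; apply: quot_intro; first by case: hP.
move=> u Uu; have [V [hV [Q [oV Vu DQ hQ]]]] := quot_lift hP Uu.
exists V, hV, (g \o Q); split => //; first exact: hg.
by move=> v; rewrite /= -hfg -hQ.
Qed.
End Quot.
Arguments quot_lift {X Y q D} HD Hq {n U P} hP {u} Uu.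
Arguments quot_intro {X Y q D n U P} _ _.
Arguments quot_is_diffeology {X Y q D} HD Hq.
Arguments quot_desc {X Y q D} HD Hq {Z DZ f} _ _.
Arguments quot_q {X Y q D} HD.
Arguments quot_map {X Y q D} HD Hq {f g} _ _.
Arguments restrict_plot {X D} _ {n U V} hV {P} _ _.
Arguments dsmooth_comp {X Y Z DX DY DZ f g} _ _.

Section Alg.
Variables (G M : Type) (src tgt : G -> M) (unit : M -> G) (inv : G -> G)
  (mul : G -> G -> G).
Hypothesis HA : groupoid_axioms src tgt unit inv mul.

Lemma src_unit x : src (unit x) = x. Proof. by case: HA => h _; case: (h x). Qed.
Lemma tgt_unit x : tgt (unit x) = x. Proof. by case: HA => h _; case: (h x). Qed.
Lemma src_inv g : src (inv g) = tgt g. Proof. by case: HA => _ [h _]; case: (h g). Qed.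
Lemma tgt_inv g : tgt (inv g) = src g. Proof. by case: HA => _ [h _]; case: (h g). Qed.
Lemma src_mul g h : src g = tgt h -> src (mul g h) = src h.
Proof. by case: HA => _ [_ [hm _]] e; case: (hm g h e). Qed.
Lemma tgt_mul g h : src g = tgt h -> tgt (mul g h) = tgt g.
Proof. by case: HA => _ [_ [hm _]] e; case: (hm g h e). Qed.
Lemma mulA g h k : src g = tgt h -> src h = tgt k ->
  mul (mul g h) k = mul g (mul h k).
Proof. by case: HA => _ [_ [_ [ha _]]]; apply: ha. Qed.
Lemma mul1g g : mul (unit (tgt g)) g = g.
Proof. by case: HA => _ [_ [_ [_ [h _]]]]; case: (h g). Qed.
Lemma mulg1 g : mul g (unit (src g)) = g.
Proof. by case: HA => _ [_ [_ [_ [h _]]]]; case: (h g). Qed.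
Lemma mulgV g : mul g (inv g) = unit (tgt g).
Proof. by case: HA => _ [_ [_ [_ [_ h]]]]; case: (h g). Qed.
Lemma mulVg g : mul (inv g) g = unit (src g).
Proof. by case: HA => _ [_ [_ [_ [_ h]]]]; case: (h g). Qed.

Ltac st := repeat match goal with
  | |- context [src (unit ?x)] => rewrite (src_unit x)
  | |- context [tgt (unit ?x)] => rewrite (tgt_unit x)
  | |- context [src (inv ?x)] => rewrite (src_inv x)
  | |- context [tgt (inv ?x)] => rewrite (tgt_inv x)
  | |- context [src (mul ?a ?b)] =>
      let E := fresh in assert (E : src a = tgt b) by st;
      rewrite (src_mul a b E); clear E
  | |- context [tgt (mul ?a ?b)] =>
      let E := fresh in assert (E : src a = tgt b) by st;
      rewrite (tgt_mul a b E); clear E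
  end; try congruence.

Lemma mul1g' x g : tgt g = x -> mul (unit x) g = g.
Proof. by move=> <-; apply: mul1g. Qed.
Lemma mulg1' x g : src g = x -> mul g (unit x) = g.
Proof. by move=> <-; apply: mulg1. Qed.

Lemma inv_uniq g h : src g = tgt h -> mul g h = unit (tgt g) -> h = inv g.
Proof.
move=> e gh.
have : mul (inv g) (mul g h) = mul (inv g) (unit (tgt g)) by rewrite gh.
rewrite -mulA; try by st.
rewrite mulVg mul1g'; try by st.
move=> ->; rewrite mulg1'; by st.
Qed.

Lemma invK g : inv (inv g) = g.
Proof. by symmetry; apply: inv_uniq; [st| rewrite mulVg tgt_inv]. Qed.

Lemma inv_mul g h : src g = tgt h -> inv (mul g h) = mul (inv h) (inv g).
Proof.
move=> e; symmetry; apply: inv_uniq; first by st.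
rewrite mulA; try by st.
rewrite -(mulA h (inv h)); try by st.
rewrite mulgV mul1g'; try by st.
rewrite mulgV; by st.
Qed.

Lemma inv_unit x : inv (unit x) = unit x.
Proof.
symmetry; apply: inv_uniq; first by st.
by rewrite mul1g' ?tgt_unit.
Qed.

Notation CS := (commutator_sub src tgt unit inv mul).
Definition cjg g n := mul (mul g n) (inv g).

Lemma cs_iso x n : CS x n -> src n = x /\ tgt n = x.
Proof.
elim => [|a b [sa ta] [sb tb]|g h _ [sg tg] _ [sh th]|g _ [sg tg]]; split; st.
Qed.

Lemma conj_unit g : cjg g (unit (src g)) = unit (tgt g).
Proof. by rewrite /cjg mulg1 mulgV. Qed.

Lemma conj_mul g n m : src n = src g -> tgt n = src g -> src m = src g ->
  tgt m = src g -> cjg g (mul n m) = mul (cjg g n) (cjg g m).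
Proof.
move=> sn tn sm tm; rewrite /cjg.
rewrite (mulA (mul g n) (inv g) (mul (mul g m) (inv g))); try by st.
rewrite -(mulA (inv g) (mul g m) (inv g)); try by st.
rewrite -(mulA (inv g) g m); try by st.
rewrite mulVg (mul1g' _ m); try by st.
rewrite -(mulA (mul g n) m (inv g)); try by st.
rewrite (mulA g n m); by st.
Qed.

Lemma conj_inv g n : src n = src g -> tgt n = src g ->
  cjg g (inv n) = inv (cjg g n).
Proof.
move=> sn tn; rewrite /cjg.
rewrite (inv_mul (mul g n) (inv g)); try by st.
rewrite invK (inv_mul g n); try by st.
rewrite (mulA g (inv n) (inv g)); by st.
Qed.

Lemma cs_conj x n : CS x n -> forall g, src g = x -> CS (tgt g) (cjg g n).
Proof.
elim => [|a b [sa ta] [sb tb]|n1 n2 c1 IH1 c2 IH2|n1 c1 IH1] g sg.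
- by subst x; rewrite conj_unit; constructor.
- subst x.
  rewrite conj_mul; try by st.
  rewrite !conj_mul; try by st.
  rewrite (conj_inv g a) ?(conj_inv g b); try by st.
  by apply: cs_comm; rewrite /isotropic /cjg; split; st.
- have [s1 t1] := cs_iso _ _ c1; have [s2 t2] := cs_iso _ _ c2.
  subst x; rewrite conj_mul; try by st.
  by constructor; [apply: IH1|apply: IH2].
- have [s1 t1] := cs_iso _ _ c1; subst x.
  by rewrite conj_inv; try by st; constructor; apply: IH1.
Qed.

Notation AR := (ab_rel src tgt unit inv mul).
Notation CSG := (comm_subgpd src tgt unit inv mul).

Lemma csg_iso n : CSG n -> CS (src n) n /\ src n = tgt n.
Proof. by move=> [x c]; have [s t] := cs_iso _ _ c; rewrite s t. Qed.

Lemma ab_refl g : AR g g.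
Proof.
exists (unit (tgt g)); split; first by exists (tgt g); constructor.
by split; [st| rewrite mul1g].
Qed.

Lemma ab_src g h : AR g h -> src h = src g.
Proof. by move=> [n [cn [sn ->]]]; st. Qed.

Lemma ab_tgt g h : AR g h -> tgt h = tgt g.
Proof.
move=> [n [cn [sn ->]]]; have [_ e] := csg_iso _ cn; st.
Qed.

Lemma ab_sym g h : AR g h -> AR h g.
Proof.
move=> [n [cn [sn ->]]]; have [c e] := csg_iso _ cn.
exists (inv n); split; first by exists (src n); constructor.
split; first by st.
rewrite -mulA; try by st.
by rewrite mulVg mul1g'; st.
Qed.

Lemma ab_trans g h k : AR g h -> AR h k -> AR g k.
Proof.
move=> [n [cn [sn ->]]] [m [cm [sm ->]]].
have [c1 e1] := csg_iso _ cn; have [c2 e2] := csg_iso _ cm.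
have smx : src m = src n by move: sm; st.
exists (mul m n); split.
  by exists (src n); constructor => //; rewrite -smx.
split; first by st.
rewrite mulA; by st.
Qed.

Lemma ab_mulr g g' h : AR g g' -> src g = tgt h -> AR (mul g h) (mul g' h).
Proof.
move=> [n [cn [sn ->]]] e; have [c1 e1] := csg_iso _ cn.
exists n; split => //; split; first by st.
rewrite mulA; by st.
Qed.

Lemma ab_mull g h h' : AR h h' -> src g = tgt h -> AR (mul g h) (mul g h').
Proof.
move=> [m [cm [sm ->]]] e; have [c1 e1] := csg_iso _ cm.
exists (cjg g m); split.
  exists (tgt g); apply: cs_conj; first exact: c1. by st.
split; first by rewrite /cjg; st.
rewrite /cjg.
rewrite (mulA (mul g m) (inv g) (mul g h)); try by st.
rewrite -(mulA (inv g) g h); try by st.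
rewrite mulVg (mul1g' _ h); try by st.
rewrite (mulA g m h); by st.
Qed.

Lemma ab_inv g h : AR g h -> AR (inv g) (inv h).
Proof.
move=> [n [cn [sn ->]]]; have [c1 e1] := csg_iso _ cn.
exists (cjg (inv g) (inv n)); split.
  exists (tgt (inv g)); apply: cs_conj; first by constructor; exact: c1.
  by st.
split; first by rewrite /cjg; st.
rewrite /cjg invK (inv_mul n g); try by st.
rewrite (mulA (mul (inv g) (inv n)) g (inv g)); try by st.
rewrite mulgV mulg1'; by st.
Qed.

Lemma ab_comm x g h : isotropic src tgt x g -> isotropic src tgt x h ->
  AR (mul h g) (mul g h).
Proof.
move=> [sg tg] [sh th].
exists (mul (mul g h) (mul (inv g) (inv h))); split.
  by exists x; constructor.
split; first by st.
rewrite (mulA (mul g h) (mul (inv g) (inv h)) (mul h g)); try by st.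
rewrite (mulA (inv g) (inv h) (mul h g)); try by st.
rewrite -(mulA (inv h) h g); try by st.
rewrite mulVg (mul1g' _ g); try by st.
rewrite mulVg mulg1'; by st.
Qed.


Lemma idem_unit e : src e = tgt e -> mul e e = e -> e = unit (src e).
Proof.
move=> se ee.
have : mul (inv e) (mul e e) = mul (inv e) e by rewrite ee.
rewrite -mulA; try by st.
by rewrite mulVg mul1g'; st.
Qed.

Lemma comm_unit y A B : abelian_gpd src tgt mul ->
  isotropic src tgt y A -> isotropic src tgt y B ->
  mul (mul A B) (mul (inv A) (inv B)) = unit y.
Proof.
move=> hab iA iB; have [sA tA] := iA; have [sB tB] := iB.
rewrite (hab y A B iA iB).
rewrite (mulA B A (mul (inv A) (inv B))); try by st.
rewrite -(mulA A (inv A) (inv B)); try by st.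
rewrite mulgV (mul1g' _ (inv B)); try by st.
rewrite mulgV; by st.
Qed.

End Alg.

Arguments src_unit {G M src tgt unit inv mul} HA x.
Arguments tgt_unit {G M src tgt unit inv mul} HA x.
Arguments src_inv {G M src tgt unit inv mul} HA g.
Arguments tgt_inv {G M src tgt unit inv mul} HA g.
Arguments src_mul {G M src tgt unit inv mul} HA g h _.
Arguments tgt_mul {G M src tgt unit inv mul} HA g h _.
Arguments mulA {G M src tgt unit inv mul} HA g h k _ _.
Arguments mul1g' {G M src tgt unit inv mul} HA x g _.
Arguments mulg1' {G M src tgt unit inv mul} HA x g _.
Arguments mulgV {G M src tgt unit inv mul} HA g.
Arguments mulVg {G M src tgt unit inv mul} HA g.
Arguments inv_uniq {G M src tgt unit inv mul} HA g h _ _.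
Arguments inv_unit {G M src tgt unit inv mul} HA x.
Arguments idem_unit {G M src tgt unit inv mul} HA e _ _.
Arguments comm_unit {G M src tgt unit inv mul} HA y A B _ _ _.
Arguments cs_iso {G M src tgt unit inv mul} HA x n _.
Arguments csg_iso {G M src tgt unit inv mul} HA n _.

Arguments ab_refl {G M src tgt unit inv mul} HA g.
Arguments ab_src {G M src tgt unit inv mul} HA {g h} _.
Arguments ab_tgt {G M src tgt unit inv mul} HA {g h} _.
Arguments ab_sym {G M src tgt unit inv mul} HA {g h} _.
Arguments ab_trans {G M src tgt unit inv mul} HA {g h k} _ _.
Arguments ab_mulr {G M src tgt unit inv mul} HA {g g' h} _ _.
Arguments ab_mull {G M src tgt unit inv mul} HA {g h h'} _ _.
Arguments ab_inv {G M src tgt unit inv mul} HA {g h} _.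
Arguments ab_comm {G M src tgt unit inv mul} HA {x g h} _ _.
Ltac gst HA := lazymatch type of HA with
 | groupoid_axioms ?src ?tgt ?unit ?inv ?mul =>
  repeat match goal with
  | |- context [src (unit ?x)] => rewrite (src_unit HA x)
  | |- context [tgt (unit ?x)] => rewrite (tgt_unit HA x)
  | |- context [src (inv ?x)] => rewrite (src_inv HA x)
  | |- context [tgt (inv ?x)] => rewrite (tgt_inv HA x)
  | |- context [src (mul ?a ?b)] =>
      let E := fresh in assert (E : src a = tgt b) by gst HA;
      rewrite (src_mul HA a b E); clear E
  | |- context [tgt (mul ?a ?b)] =>
      let E := fresh in assert (E : src a = tgt b) by gst HA;
      rewrite (tgt_mul HA a b E); clear E
  end; try congruence
 end.

Section Psi.
Variables (G M : Type) (src tgt : G -> M) (unit : M -> G) (inv : G -> G)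
  (mul : G -> G -> G).
Hypothesis HG : groupoid_axioms src tgt unit inv mul.
Variables (H N : Type) (srcH tgtH : H -> N) (unitH : N -> H) (invH : H -> H)
  (mulH : H -> H -> H).
Hypothesis HH : groupoid_axioms srcH tgtH unitH invH mulH.
Hypothesis Hab : abelian_gpd srcH tgtH mulH.
Variables (U : set M) (psi : res_arr src tgt U -> H) (psi0 : {x | U x} -> N).
Hypothesis Hs : forall g, srcH (psi g) = psi0 (res_src src tgt U g).
Hypothesis Ht : forall g, tgtH (psi g) = psi0 (res_tgt src tgt U g).
Hypothesis Hc : forall g h k, res_comp src tgt mul U g h k ->
  comp_graph srcH tgtH mulH (psi g) (psi h) (psi k).

Lemma psi_pi g g' (p : U (src g) /\ U (tgt g)) (p' : U (src g') /\ U (tgt g')) :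
  g = g' -> psi (exist _ g p) = psi (exist _ g' p').
Proof. by move=> e; subst g'; rewrite (Prop_irrelevance p p'). Qed.

Arguments psi_pi {g g'} p p' _.
Lemma psi_mul g h (e : src g = tgt h) pg ph pgh :
  psi (exist _ (mul g h) pgh) = mulH (psi (exist _ g pg)) (psi (exist _ h ph)) /\
  srcH (psi (exist _ g pg)) = tgtH (psi (exist _ h ph)).
Proof.
have [a b] := Hc (exist _ g pg) (exist _ h ph) (exist _ (mul g h) pgh) (conj e erefl).
by split.
Qed.

Arguments psi_mul {g h} e pg ph pgh.
Lemma psi_src0 g p x (Ux : U x) : src g = x ->
  srcH (psi (exist _ g p)) = psi0 (exist _ x Ux).
Proof.
move=> e; rewrite Hs /res_src /=; subst x.
by rewrite (Prop_irrelevance (proj1 p) Ux).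
Qed.

Arguments psi_src0 {g} p {x} Ux _.
Lemma psi_tgt0 g p x (Ux : U x) : tgt g = x ->
  tgtH (psi (exist _ g p)) = psi0 (exist _ x Ux).
Proof.
move=> e; rewrite Ht /res_tgt /=; subst x.
by rewrite (Prop_irrelevance (proj2 p) Ux).
Qed.

Arguments psi_tgt0 {g} p {x} Ux _.
Lemma isoP x (Ux : U x) g : src g = x -> tgt g = x -> U (src g) /\ U (tgt g).
Proof. by move=> -> ->. Qed.

Arguments isoP {x} Ux {g} _ _.
Lemma psi_unit x (Ux : U x) p :
  psi (exist _ (unit x) p) = unitH (psi0 (exist _ x Ux)).
Proof.
have m : mul (unit x) (unit x) = unit x by apply: (mul1g' HG); gst HG.
have pm : U (src (mul (unit x) (unit x))) /\ U (tgt (mul (unit x) (unit x))).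
  by rewrite m.
have E : src (unit x) = tgt (unit x) by gst HG.
have [e1 e2] := psi_mul E p p pm.
rewrite (psi_pi pm p m) in e1.
rewrite (idem_unit HH _ e2 (esym e1)).
by rewrite (psi_src0 _ Ux) //; gst HG.
Qed.

Lemma psi_inv x (Ux : U x) a pa pia : src a = x -> tgt a = x ->
  psi (exist _ (inv a) pia) = invH (psi (exist _ a pa)).
Proof.
move=> sa ta.
have m : mul a (inv a) = unit x by rewrite (mulgV HG) ta.
have pm : U (src (mul a (inv a))) /\ U (tgt (mul a (inv a))) by rewrite m; gst HG.
have E : src a = tgt (inv a) by gst HG.
have [e1 e2] := psi_mul E pa pia pm.
have pu : U (src (unit x)) /\ U (tgt (unit x)) by gst HG.
rewrite (psi_pi pm pu m) (psi_unit _ Ux) in e1.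
apply: (inv_uniq HH _ _ e2).
by rewrite -e1 (psi_tgt0 _ Ux).
Qed.

Arguments psi_inv {x} Ux {a} pa pia _ _.
Lemma psi_kill x (Ux : U x) n : commutator_sub src tgt unit inv mul x n ->
  forall pn, psi (exist _ n pn) = unitH (psi0 (exist _ x Ux)).
Proof.
elim => [|a b [sa ta] [sb tb]|n1 n2 c1 IH1 c2 IH2|n1 c1 IH1] pn.
- exact: psi_unit.
- pose y := psi0 (exist _ x Ux).
  have pa := isoP Ux sa ta; have pb := isoP Ux sb tb.
  have pia : U (src (inv a)) /\ U (tgt (inv a)) by apply: (isoP Ux); gst HG.
  have pib : U (src (inv b)) /\ U (tgt (inv b)) by apply: (isoP Ux); gst HG.
  have pab : U (src (mul a b)) /\ U (tgt (mul a b)) by apply: (isoP Ux); gst HG.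
  have piab : U (src (mul (inv a) (inv b))) /\ U (tgt (mul (inv a) (inv b))).
    by apply: (isoP Ux); gst HG.
  have E1 : src (mul a b) = tgt (mul (inv a) (inv b)) by gst HG.
  have E2 : src a = tgt b by gst HG.
  have E3 : src (inv a) = tgt (inv b) by gst HG.
  have [-> _] := psi_mul E1 pab piab pn.
  have [-> _] := psi_mul E2 pa pb pab.
  have [-> _] := psi_mul E3 pia pib piab.
  rewrite (psi_inv Ux pa pia sa ta) (psi_inv Ux pb pib sb tb).
  apply: (comm_unit HH) => //; split;
    by [rewrite (psi_src0 _ Ux) | rewrite (psi_tgt0 _ Ux)].
- have [s1 t1] := cs_iso HG _ _ c1; have [s2 t2] := cs_iso HG _ _ c2.
  have p1 := isoP Ux s1 t1; have p2 := isoP Ux s2 t2.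
  have E : src n1 = tgt n2 by congruence.
  have [-> _] := psi_mul E p1 p2 pn.
  rewrite (IH1 p1) (IH2 p2).
  by apply: (mul1g' HH); gst HH.
- have [s1 t1] := cs_iso HG _ _ c1.
  have p1 := isoP Ux s1 t1.
  rewrite (psi_inv Ux p1 pn s1 t1) (IH1 p1).
  exact: (inv_unit HH).
Qed.

Lemma psi_ab g h pg ph : ab_rel src tgt unit inv mul g h ->
  psi (exist _ h ph) = psi (exist _ g pg).
Proof.
move=> [n [cn [sn eh]]]; subst h.
have [c e] := csg_iso HG _ cn.
have Ux : U (src n) by rewrite sn; case: pg.
have pn := isoP Ux erefl (esym e).
have [-> _] := psi_mul sn pn pg ph.
rewrite (psi_kill _ Ux _ c pn).
apply: (mul1g' HH); apply: psi_tgt0; congruence.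
Qed.

End Psi.
Arguments psi_ab {G M src tgt unit inv mul} HG {H N srcH tgtH unitH invH mulH} HH Hab {U psi psi0} Hs Ht Hc {g h} pg ph _.


Section Main.
Variables (G M : Type) (DG : plots G) (DM : plots M)
  (src tgt : G -> M) (unit : M -> G) (inv : G -> G) (mul : G -> G -> G).
Hypothesis HD : is_dgroupoid DG DM src tgt unit inv mul.

Let HA : groupoid_axioms src tgt unit inv mul.
Proof. by case: HD => [[]]. Qed.
Let dG : is_diffeology DG.
Proof. by case: HD => [[]]. Qed.
Let dM : is_diffeology DM.
Proof. by case: HD => [[]]. Qed.

Notation p := (ab_proj src tgt unit inv mul).
Notation Q := (ab_quot src tgt unit inv mul).
Notation AR := (ab_rel src tgt unit inv mul).

Definition rep (a : Q) : G := proj1_sig (cid (proj2_sig a)).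

Lemma rep_spec a : p (rep a) = a.
Proof.
rewrite /rep; case: (cid _) => g e /=.
case: a e => A hA /= e; apply: eq_exist_pi; by rewrite e.
Qed.

Lemma proj_eq g h : AR g h -> p g = p h.
Proof.
move=> e; apply: eq_exist_pi; apply: funext => k; apply: propext; split.
- by move=> gk; apply: (ab_trans HA) (ab_sym HA e) gk.
- by move=> hk; apply: (ab_trans HA) e hk.
Qed.

Lemma proj_rel g h : p g = p h -> AR g h.
Proof.
move=> e; have := ab_refl HA h.
by have -> : AR h = AR g by move: (f_equal (@proj1_sig _ _) e) => /= ->.
Qed.

Lemma rep_rel g : AR g (rep (p g)).
Proof. by apply: (ab_sym HA); apply: proj_rel; rewrite rep_spec. Qed.

Lemma surjp a : exists g, p g = a.
Proof. by exists (rep a); apply: rep_spec. Qed.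

Definition srcQ (a : Q) := src (rep a).
Definition tgtQ (a : Q) := tgt (rep a).
Definition unitQ (x : M) : Q := p (unit x).
Definition invQ (a : Q) : Q := p (inv (rep a)).
Definition mulQ (a b : Q) : Q := p (mul (rep a) (rep b)).

Lemma srcQ_p g : srcQ (p g) = src g.
Proof. by rewrite /srcQ (ab_src HA (rep_rel g)). Qed.
Lemma tgtQ_p g : tgtQ (p g) = tgt g.
Proof. by rewrite /tgtQ (ab_tgt HA (rep_rel g)). Qed.
Lemma invQ_p g : invQ (p g) = p (inv g).
Proof. by apply: proj_eq; apply: (ab_sym HA); apply: (ab_inv HA); apply: rep_rel. Qed.
Lemma mulQ_p g h : src g = tgt h -> mulQ (p g) (p h) = p (mul g h).
Proof.
move=> e; apply: proj_eq; apply: (ab_sym HA).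
have r1 := rep_rel g; have r2 := rep_rel h.
apply: (ab_trans HA (h := mul (rep (p g)) h)).
  by apply: (ab_mulr HA).
apply: (ab_mull HA) => //.
by rewrite (ab_src HA r1).
Qed.

Ltac elimQ a := let g := fresh "g" in case: (surjp a) => g <-.

Lemma Q_axioms : groupoid_axioms srcQ tgtQ unitQ invQ mulQ.
Proof.
split.
  by move=> x; rewrite /unitQ !srcQ_p !tgtQ_p (src_unit HA) (tgt_unit HA).
split.
  by move=> a; elimQ a; rewrite invQ_p !srcQ_p !tgtQ_p (src_inv HA) (tgt_inv HA).
split.
  move=> a b; elimQ a; elimQ b => e; rewrite !srcQ_p !tgtQ_p in e.
  by rewrite mulQ_p // !srcQ_p !tgtQ_p (src_mul HA _ _ e) (tgt_mul HA _ _ e).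
split.
  move=> a b c; elimQ a; elimQ b; elimQ c => e1 e2; rewrite !srcQ_p !tgtQ_p in e1 e2.
  rewrite (mulQ_p _ _ e1) (mulQ_p _ _ e2) mulQ_p; last by rewrite (src_mul HA _ _ e1).
  rewrite mulQ_p; last by rewrite (tgt_mul HA _ _ e2).
  by rewrite (mulA HA _ _ _ e1 e2).
split.
  move=> a; elimQ a; rewrite /unitQ !srcQ_p !tgtQ_p.
  rewrite mulQ_p; last by rewrite (src_unit HA).
  rewrite mulQ_p; last by rewrite (tgt_unit HA).
  by rewrite (mul1g' HA _ _ erefl) (mulg1' HA _ _ erefl).
move=> a; elimQ a; rewrite /unitQ invQ_p !srcQ_p !tgtQ_p.
rewrite mulQ_p; last by rewrite (tgt_inv HA).
rewrite mulQ_p; last by rewrite (src_inv HA).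
by rewrite (mulgV HA) (mulVg HA).
Qed.

Lemma Q_abelian : abelian_gpd srcQ tgtQ mulQ.
Proof.
move=> x a b; elimQ a; elimQ b; rewrite /isotropic !srcQ_p !tgtQ_p.
move=> [s1 t1] [s2 t2].
rewrite mulQ_p; last by congruence.
rewrite mulQ_p; last by congruence.
apply: proj_eq; exact: (ab_comm HA (x := x)).
Qed.

Notation DQ := (quot_plots p DG).

Lemma dQ : is_diffeology DQ.
Proof. exact: quot_is_diffeology dG surjp. Qed.

Lemma mulQ_smooth : dsmooth (sub_plots (composable srcQ tgtQ) (prod_plots DQ DQ)) DQ
  (fun pr => mulQ (proj1_sig pr).1 (proj1_sig pr).2).
Proof.
move=> n U P [h1 h2].
apply: quot_intro; first by case: h1.
move=> u Uu.
have [V1 [hV1 [Q1 [oV1 V1u DQ1 hQ1]]]] := quot_lift dG surjp h1 Uu.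
have [V2 [hV2 [Q2 [oV2 V2u DQ2 hQ2]]]] := quot_lift dG surjp h2 Uu.
pose W := V1 `&` V2.
have hW1 : W `<=` V1 by move=> w [].
have hW2 : W `<=` V2 by move=> w [].
have hWU : W `<=` U by move=> w [/hV1].
have oW : open W by apply: openI.
pose R1 := restrict_par hW1 Q1; pose R2 := restrict_par hW2 Q2.
have DR1 : DG n W R1 by exact: (restrict_plot dG hW1 DQ1 oW).
have DR2 : DG n W R2 by exact: (restrict_plot dG hW2 DQ2 oW).
have e1 : forall w, (proj1_sig (P (exist _ (proj1_sig w) (hWU _ (proj2_sig w))))).1 = p (R1 w).
  move=> w; rewrite /R1 /restrict_par -hQ1 /restrict_par /=.
  by congr (proj1_sig (P _)).1; apply: eq_exist_pi.
have e2 : forall w, (proj1_sig (P (exist _ (proj1_sig w) (hWU _ (proj2_sig w))))).2 = p (R2 w).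
  move=> w; rewrite /R2 /restrict_par -hQ2 /restrict_par /=.
  by congr (proj1_sig (P _)).2; apply: eq_exist_pi.
have comp : forall w, src (R1 w) = tgt (R2 w).
  move=> w; rewrite -srcQ_p -tgtQ_p -e1 -e2.
  exact: (proj2_sig (P (exist _ (proj1_sig w) (hWU _ (proj2_sig w))))).
pose PP := fun w => exist (composable src tgt) (R1 w, R2 w) (comp w).
have DPP : sub_plots (composable src tgt) (prod_plots DG DG) n W PP by split.
have [_ [_ _ _ _ hm]] := HD.
exists W, hWU, (fun w => mul (R1 w) (R2 w)); split => //.
  exact: (hm n W PP DPP).
move=> w; rewrite /restrict_par /= -/(restrict_par _ _ _).
by rewrite e1 e2 mulQ_p.
Qed.

Lemma Q_dgroupoid : is_dgroupoid DQ DM srcQ tgtQ unitQ invQ mulQ.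
Proof.
have [_ [sS sT sU sI _]] := HD.
split; first by split => //; [exact: dQ | exact: Q_axioms].
split.
- apply: (quot_desc dG surjp) => //.
  by have -> : srcQ \o p = src by apply: funext => g; rewrite /= srcQ_p.
- apply: (quot_desc dG surjp) => //.
  by have -> : tgtQ \o p = tgt by apply: funext => g; rewrite /= tgtQ_p.
- exact: (dsmooth_comp sU (quot_q dG)).
- exact: (quot_map dG surjp invQ_p sI).
- exact: mulQ_smooth.
Qed.


Lemma p_morph : is_gpd_morphism DG DM DQ DM src tgt (comp_graph src tgt mul)
  srcQ tgtQ (comp_graph srcQ tgtQ mulQ) p id.
Proof.
split.
- exact: (quot_q dG).
- by move=> n U P h.
- exact: srcQ_p.
- exact: tgtQ_p.
- move=> g h k [e ->]; split; first by rewrite srcQ_p tgtQ_p.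
  by rewrite mulQ_p.
Qed.

Lemma universal (U : set M) :
      forall (H N : Type) (DH : plots H) (DN : plots N)
             (srcH tgtH : H -> N) (unitH : N -> H) (invH : H -> H)
             (mulH : H -> H -> H),
        is_dgroupoid DH DN srcH tgtH unitH invH mulH ->
        abelian_gpd srcH tgtH mulH ->
      forall (psi : res_arr src tgt U -> H) (psi0 : {x | U x} -> N),
        is_gpd_morphism (res_arr_plots DG src tgt U) (res_obj_plots DM U) DH DN
          (res_src src tgt U) (res_tgt src tgt U)
          (res_comp src tgt mul U)
          srcH tgtH (comp_graph srcH tgtH mulH) psi psi0 ->
        exists chi : res_arr srcQ tgtQ U -> H,
          [/\ is_gpd_morphism (res_arr_plots DQ srcQ tgtQ U) (res_obj_plots DM U)
                DH DN (res_src srcQ tgtQ U) (res_tgt srcQ tgtQ U)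
                (res_comp srcQ tgtQ mulQ U)
                srcH tgtH (comp_graph srcH tgtH mulH) chi psi0,
              (forall g a, proj1_sig a = p (proj1_sig g) -> chi a = psi g) &
              forall (chi' : res_arr srcQ tgtQ U -> H) (chi0' : {x | U x} -> N),
                is_gpd_morphism (res_arr_plots DQ srcQ tgtQ U) (res_obj_plots DM U)
                  DH DN (res_src srcQ tgtQ U) (res_tgt srcQ tgtQ U)
                  (res_comp srcQ tgtQ mulQ U)
                  srcH tgtH (comp_graph srcH tgtH mulH) chi' chi0' ->
                (forall g a, proj1_sig a = p (proj1_sig g) -> chi' a = psi g) ->
                chi' = chi].
Proof.
move=> H N DH DN srcH tgtH unitH invH mulH HDH HabH psi psi0 [psm p0sm Hs Ht Hc].
have HH : groupoid_axioms srcH tgtH unitH invH mulH by case: HDH => [[]].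
have dH : is_diffeology DH by case: HDH => [[]].
pose chi (a : res_arr srcQ tgtQ U) : H :=
  psi (exist (fun g => U (src g) /\ U (tgt g)) (rep (proj1_sig a)) (proj2_sig a)).
have chi_spec : forall g a, proj1_sig a = p (proj1_sig g) -> chi a = psi g.
  move=> [g pg] a /= e; rewrite /chi.
  apply: (psi_ab HA HH HabH Hs Ht Hc).
  by rewrite e; apply: rep_rel.
exists chi; split => //.
- split => //.
  + move=> n U' P hP.
    have [_ [_ [hloc _]]] := dH.
    apply: hloc; first by case: hP.
    move=> u Uu; have [V [hV [Q0 [oV Vu DQ0 hQ0]]]] := quot_lift dG surjp hP Uu.
    have pQ : forall v, U (src (Q0 v)) /\ U (tgt (Q0 v)).
      move=> v; have := proj2_sig (P (exist _ (proj1_sig v) (hV _ (proj2_sig v)))).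
      have := hQ0 v; rewrite /restrict_par /= => ->.
      by rewrite srcQ_p tgtQ_p.
    pose Q' := fun v => exist (fun g => U (src g) /\ U (tgt g)) (Q0 v) (pQ v).
    exists V, hV; split => //.
    have -> : restrict_par hV (chi \o P) = psi \o Q'.
      apply: funext => v.
      exact: (chi_spec (Q' v) (P (exist _ (proj1_sig v) (hV _ (proj2_sig v)))) (hQ0 v)).
    by apply: psm.
  + move=> a; exact: Hs.
  + move=> a; exact: Ht.
  + move=> a b c [e ec].
    pose ga := exist (fun g => U (src g) /\ U (tgt g)) (rep (proj1_sig a)) (proj2_sig a).
    pose gb := exist (fun g => U (src g) /\ U (tgt g)) (rep (proj1_sig b)) (proj2_sig b).
    have pc : U (src (mul (rep (proj1_sig a)) (rep (proj1_sig b)))) /\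
              U (tgt (mul (rep (proj1_sig a)) (rep (proj1_sig b)))).
      rewrite (src_mul HA _ _ e) (tgt_mul HA _ _ e).
      by split; [case: (proj2_sig b) | case: (proj2_sig a)].
    pose gc := exist (fun g => U (src g) /\ U (tgt g)) _ pc.
    have := Hc ga gb gc (conj e erefl).
    by rewrite (chi_spec gc c ec).
- move=> chi' chi0' _ h'; apply: funext => a.
  rewrite /chi; apply: h' => /=.
  by rewrite rep_spec.
Qed.

End Main.

Local Close Scope ring_scope.
Local Close Scope classical_set_scope.

Theorem mainTheorem14 (G M : Type) (DG : plots G) (DM : plots M)
    (src tgt : G -> M) (unit : M -> G) (inv : G -> G) (mul : G -> G -> G) :
  is_dgroupoid DG DM src tgt unit inv mul ->
  exists (srcQ tgtQ : ab_quot src tgt unit inv mul -> M)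
         (unitQ : M -> ab_quot src tgt unit inv mul)
         (invQ : ab_quot src tgt unit inv mul -> ab_quot src tgt unit inv mul)
         (mulQ : ab_quot src tgt unit inv mul -> ab_quot src tgt unit inv mul ->
                 ab_quot src tgt unit inv mul),
    (* the groupoid structure on G/(G,G) is the one induced by the quotient map *)
    [/\ forall g, srcQ (ab_proj src tgt unit inv mul g) = src g,
        forall g, tgtQ (ab_proj src tgt unit inv mul g) = tgt g,
        forall x, unitQ x = ab_proj src tgt unit inv mul (unit x),
        forall g, invQ (ab_proj src tgt unit inv mul g)
                  = ab_proj src tgt unit inv mul (inv g) &
        forall g h, src g = tgt h ->
          mulQ (ab_proj src tgt unit inv mul g) (ab_proj src tgt unit inv mul h)
          = ab_proj src tgt unit inv mul (mul g h)] /\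
    (* with the quotient diffeology it is a diffeological groupoid and,
       with the quotient map, the abelianization of G *)
    is_abelianization DG DM src tgt unit inv mul
      (quot_plots (ab_proj src tgt unit inv mul) DG)
      srcQ tgtQ unitQ invQ mulQ (ab_proj src tgt unit inv mul).
Proof.
move=> HD.
exists (@srcQ G M src tgt unit inv mul), (@tgtQ G M src tgt unit inv mul),
  (@unitQ G M src tgt unit inv mul), (@invQ G M src tgt unit inv mul),
  (@mulQ G M src tgt unit inv mul).
split.
  split.
  - exact: (@srcQ_p _ _ _ _ _ _ _ _ _ HD).
  - exact: (@tgtQ_p _ _ _ _ _ _ _ _ _ HD).
  - by [].
  - exact: (@invQ_p _ _ _ _ _ _ _ _ _ HD).
  - exact: (@mulQ_p _ _ _ _ _ _ _ _ _ HD).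
split.
- exact: (@Q_dgroupoid _ _ _ _ _ _ _ _ _ HD).
- exact: (@Q_abelian _ _ _ _ _ _ _ _ _ HD).
- exact: (@surjp _ _ _ _ _ _ _).
- exact: (@p_morph _ _ _ _ _ _ _ _ _ HD).
- move=> U _; exact: (@universal _ _ _ _ _ _ _ _ _ HD).
Qed.
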